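(* Let $S$ be an inverse semigroup that is a separately Scott-continuous mirror semigroup, with semilattice of idempotents $\Sigma$. Then for all $\epsilon,\delta\in\Sigma$, $\epsilon \prec\!\!\!\prec \delta$ if and only if $\epsilon\ll\delta$.
   Context: An inverse semigroup is a semigroup $S$ in which every $s$ has a unique $s^*$ with $ss^*s=s$ and $s^*ss^*=s^*$. $\Sigma=\Sigma(S)$ is the set of idempotents. The intrinsic order is $s\leqslant t$ iff $s=t\epsilon$ for some idempotent $\epsilon$. A subset is directed if nonempty and any two elements have an upper bound in it. $S$ is a mirror semigroup if every directed subset of $\Sigma$ having a supremum in $(\Sigma,\leqslant)$ also has a supremum in $(S,\leqslant)$. $S$ is separately Scott-continuous if for every directed $D\subseteq S$ with a supremum $\bigvee D$ in $S$ and every $s\in S$, $\bigvee(Ds)$ exists in $S$ and equals $(\bigvee D)s$. In a poset, $x$ is way-below $y$ if for every directed subset $D$ that has a supremum with $y\leqslant \sup D$, there is $d\in D$ with $x\leqslant d$. $\ll$ denotes the way-below relation of the poset $(S,\leqslant)$ and $\prec\!\!\!\prec$ the way-below relation of the poset $(\Sigma,\leqslant)$. *)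

(* Defs.v *)
Definition is_assoc {S : Type} (mul : S -> S -> S) : Prop :=
  forall x y z, mul x (mul y z) = mul (mul x y) z.

Definition inverse_semigroup_axiom {S : Type} (mul : S -> S -> S) : Prop :=
  forall s, exists! t, mul (mul s t) s = s /\ mul (mul t s) t = t.

Definition idem {S : Type} (mul : S -> S -> S) (e : S) : Prop := mul e e = e.

Definition ileq {S : Type} (mul : S -> S -> S) (s t : S) : Prop :=
  exists e, idem mul e /\ s = mul t e.

Definition directed {S : Type} (R : S -> S -> Prop) (D : S -> Prop) : Prop :=
  (exists x, D x) /\
  forall x y, D x -> D y -> exists z, D z /\ R x z /\ R y z.

Definition is_sup_in {S : Type} (P : S -> Prop) (R : S -> S -> Prop)
  (D : S -> Prop) (u : S) : Prop :=
  P u /\ (forall x, D x -> R x u) /\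
  (forall v, P v -> (forall x, D x -> R x v) -> R u v).

Definition everywhere {S : Type} : S -> Prop := fun _ => True.

Definition way_below_in {S : Type} (P : S -> Prop) (R : S -> S -> Prop)
  (x y : S) : Prop :=
  forall D : S -> Prop, (forall d, D d -> P d) -> directed R D ->
  forall u, is_sup_in P R D u -> R y u -> exists d, D d /\ R x d.

Definition mirror {S : Type} (mul : S -> S -> S) : Prop :=
  forall D : S -> Prop, (forall d, D d -> idem mul d) -> directed (ileq mul) D ->
  (exists u, is_sup_in (idem mul) (ileq mul) D u) ->
  exists v, is_sup_in everywhere (ileq mul) D v.

Definition sep_scott_continuous {S : Type} (mul : S -> S -> S) : Prop :=
  forall D : S -> Prop, directed (ileq mul) D ->
  forall d, is_sup_in everywhere (ileq mul) D d ->
  forall s, is_sup_in everywhere (ileq mul)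
              (fun y => exists x, D x /\ y = mul x s) (mul d s).

(* Main.v *)
Require Import Defs.
From Stdlib Require Import Setoid.

Section IS.
Variable S : Type.
Variable mul : S -> S -> S.
Hypothesis Hassoc : is_assoc mul.
Hypothesis Hinv : inverse_semigroup_axiom mul.

Definition isinv (s t : S) := mul (mul s t) s = s /\ mul (mul t s) t = t.

Lemma inv_uniq s t1 t2 : isinv s t1 -> isinv s t2 -> t1 = t2.
Proof.
  intros H1 H2. destruct (Hinv s) as [a [Ha U]].
  rewrite <- (U t1 H1), <- (U t2 H2). reflexivity.
Qed.

Lemma idem_r e x : idem mul e -> mul (mul x e) e = mul x e.
Proof. intro He. rewrite <- Hassoc. unfold idem in He. now rewrite He. Qed.

Lemma prod_idem e f : idem mul e -> idem mul f -> idem mul (mul e f).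
Proof.
  intros He Hf. destruct (Hinv (mul e f)) as [a [[H1 H2] U]].
  assert (H2' : forall x, mul (mul (mul (mul x a) e) f) a = mul x a).
  { intro x. transitivity (mul x (mul (mul a (mul e f)) a)).
    - now rewrite !Hassoc.
    - now rewrite H2. }
  assert (H1' : mul (mul (mul (mul e f) a) e) f = mul e f).
  { rewrite <- H1 at 2. now rewrite !Hassoc. }
  assert (Hb : mul (mul f a) e = a).
  { symmetry. apply U. split.
    - rewrite !Hassoc. rewrite (idem_r f e Hf). rewrite (idem_r e _ He). exact H1'.
    - rewrite !Hassoc. rewrite (idem_r e _ He), (idem_r f _ Hf). rewrite H2'. reflexivity. }
  assert (K : mul (mul (mul f a) e) (mul (mul f a) e) = mul (mul f a) e).
  { rewrite !Hassoc. rewrite H2'. reflexivity. }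
  rewrite Hb in K.
  assert (E : mul e f = a).
  { apply (inv_uniq a). split; assumption. split; rewrite K; exact K. }
  unfold idem. rewrite E. exact K.
Qed.

Lemma idem_comm e f : idem mul e -> idem mul f -> mul e f = mul f e.
Proof.
  intros He Hf. pose proof (prod_idem e f He Hf) as Hef.
  pose proof (prod_idem f e Hf He) as Hfe.
  apply (inv_uniq (mul e f)).
  - unfold isinv. unfold idem in Hef. rewrite !Hef. split; reflexivity.
  - unfold isinv. unfold idem in Hef, Hfe. split.
    + rewrite !Hassoc. rewrite (idem_r f _ Hf), (idem_r e _ He).
      rewrite <- Hef at 2. now rewrite !Hassoc.
    + rewrite !Hassoc. rewrite (idem_r e _ He), (idem_r f _ Hf).
      rewrite <- Hfe at 2. now rewrite !Hassoc.
Qed.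

Lemma ileq_trans a b c : ileq mul a b -> ileq mul b c -> ileq mul a c.
Proof.
  intros [g [Hg ->]] [h [Hh ->]]. exists (mul h g). split.
  - now apply prod_idem.
  - now rewrite Hassoc.
Qed.

Lemma ileq_refl_idem d : idem mul d -> ileq mul d d.
Proof. intro Hd. exists d. split; [exact Hd | symmetry; exact Hd]. Qed.

Lemma below_idem v u : ileq mul v u -> idem mul u -> idem mul v.
Proof.
  intros [g [Hg ->]] Hu. unfold idem.
  rewrite <- (Hassoc u g (mul u g)). rewrite (Hassoc g u g).
  rewrite (idem_comm g u Hg Hu). rewrite (idem_r g _ Hg).
  rewrite Hassoc. unfold idem in Hu. now rewrite Hu.
Qed.

Lemma mono_r x u f : ileq mul x u -> idem mul f -> ileq mul (mul x f) (mul u f).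
Proof.
  intros [g [Hg ->]] Hf. exists g. split; [exact Hg|].
  rewrite <- !Hassoc. now rewrite (idem_comm g f Hg Hf).
Qed.

Lemma mul_r_le x f : idem mul f -> ileq mul (mul x f) x.
Proof. intro Hf. exists f. split; [exact Hf | reflexivity]. Qed.

End IS.

Theorem corollary4p5 (S : Type) (mul : S -> S -> S)
  (Hassoc : is_assoc mul) (Hinv : inverse_semigroup_axiom mul)
  (Hmirror : mirror mul) (Hssc : sep_scott_continuous mul) :
  forall e d : S, idem mul e -> idem mul d ->
    (way_below_in (idem mul) (ileq mul) e d <->
     way_below_in everywhere (ileq mul) e d).
Proof.
  intros e d He Hd. split.
  - intros Hw D _ Hdir u Hsup Hdu.
    destruct Hdu as [f [Hf Hdf]].
    pose (D' := fun y => exists x, D x /\ y = mul x f).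
    pose proof (Hssc D Hdir u Hsup f) as Hs'.
    destruct Hsup as [_ [Hub _]].
    assert (HD' : forall y, D' y -> idem mul y).
    { intros y [x [Hx ->]]. apply (below_idem S mul Hassoc Hinv _ d).
      - rewrite Hdf. apply (mono_r S mul Hassoc Hinv); auto.
      - exact Hd. }
    assert (Hdir' : directed (ileq mul) D').
    { destruct Hdir as [[x0 Hx0] Hd2]. split.
      - exists (mul x0 f). exists x0. auto.
      - intros y1 y2 [x1 [Hx1 ->]] [x2 [Hx2 ->]].
        destruct (Hd2 x1 x2 Hx1 Hx2) as [z [Hz [Hz1 Hz2]]].
        exists (mul z f). split; [exists z; auto|].
        split; apply (mono_r S mul Hassoc Hinv); auto. }
    destruct Hs' as [_ [Hub' Hlub']].
    assert (Hsd : is_sup_in (idem mul) (ileq mul) D' d).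
    { split; [exact Hd|]. split.
      - rewrite Hdf. exact Hub'.
      - intros v _ Hv. rewrite Hdf. apply Hlub'. exact I. exact Hv. }
    destruct (Hw D' HD' Hdir' d Hsd (ileq_refl_idem S mul d Hd)) as [y [[x [Hx ->]] Hey]].
    exists x. split; [exact Hx|].
    apply (ileq_trans S mul Hassoc Hinv _ (mul x f)); auto.
    apply (mul_r_le S mul). exact Hf.
  - intros Hw D HDi Hdir u Hsup Hdu.
    destruct (Hmirror D HDi Hdir (ex_intro _ u Hsup)) as [v Hv].
    destruct Hsup as [Hu [Hub Hlub]].
    destruct Hv as [_ [Hvub Hvlub]].
    assert (Hvu : ileq mul v u) by (apply Hvlub; [exact I | exact Hub]).
    assert (Hvi : idem mul v) by (apply (below_idem S mul Hassoc Hinv v u); auto).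
    assert (Huv : ileq mul u v) by (apply Hlub; auto).
    apply (Hw D (fun _ _ => I) Hdir v).
    + split; [exact I|]. split; auto.
    + apply (ileq_trans S mul Hassoc Hinv _ u); auto.
Qed.
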